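(* There is an $\mathcal{A}$-algebra isomorphism $\widehat{H}_{r,n}\xrightarrow{\sim}\widehat{E}_{r,n}$.
   Context: Let $r,n\ge1$, $\zeta=e^{2\pi i/r}$, $\zeta_k:=\zeta^{k-1}$, $q$ an indeterminate, $\mathcal{A}=\mathbb{Z}[q,q^{-1}]$, $s_i=(i,i+1)\in\mathfrak{S}_n$, $W=\mathfrak{S}_n$. Let $\underline{\mathfrak{s}}_n$ be the set of $n$-tuples of $r$-th roots of unity with $W$ permuting entries, and $W_\lambda$ the stabilizer of $\lambda$. $\widehat{H}_{r,n}$ is the $\mathcal{A}$-algebra generated by $g_1,\dots,g_{n-1}$, $1_\lambda$ ($\lambda\in\underline{\mathfrak{s}}_n$), $X_1^{\pm1}$ with relations: $g_ig_j=g_jg_i$ ($|i-j|\ge2$); $g_ig_{i+1}g_i=g_{i+1}g_ig_{i+1}$; $g_i1_\lambda=1_{s_i(\lambda)}g_i$; $\sum_\lambda1_\lambda=1$; $1_\lambda1_{\lambda'}=\delta_{\lambda,\lambda'}1_\lambda$; $g_i^2=1+(q-q^{-1})\sum_{\lambda:\,s_i\in W_\lambda}g_i1_\lambda$; $X_1X_1^{-1}=X_1^{-1}X_1=1$; $g_1X_1g_1X_1=X_1g_1X_1g_1$; $g_iX_1=X_1g_i$ ($2\le i\le n-1$); $X_11_\lambda=1_\lambda X_1$. For $\lambda\in\underline{\mathfrak{s}}_n$ let $\lambda^0$ be the unique element of the orbit $W\lambda$ of the form $(\zeta_1,\dots,\zeta_1,\zeta_2,\dots,\zeta_2,\dots,\zeta_r,\dots,\zeta_r)$.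 Let $\Gamma=\{(\lambda_1,\lambda_2)\in\underline{\mathfrak{s}}_n^2\mid W\lambda_1=W\lambda_2\}$. $\widehat{E}_{r,n}$ is the set of formal sums $x=\sum_{(\lambda_1,\lambda_2)\in\Gamma}x_{\lambda_1,\lambda_2}$ with $x_{\lambda_1,\lambda_2}\in 1_{\lambda_1^0}\widehat{H}_{r,n}1_{\lambda_2^0}$, an $\mathcal{A}$-algebra with componentwise addition and product $(xy)_{\lambda_1,\lambda_2}=\sum_{\tilde\lambda\in W\lambda_1}x_{\lambda_1,\tilde\lambda}y_{\tilde\lambda,\lambda_2}$. *)

(* Defs.v *)
From HB Require Import structures.
From mathcomp Require Import all_boot all_order all_algebra all_fingroup.
Set Implicit Arguments. Unset Strict Implicit. Unset Printing Implicit Defensive.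
Import GRing.Theory.
Local Open Scope ring_scope.

(* The set s_n of n-tuples of r-th roots of unity: the root zeta_k = zeta^(k-1)
   is encoded by the label (k-1) : 'I_r, so that zeta_1 < ... < zeta_r
   corresponds to the natural order on 'I_r. *)
Notation sn r n := {ffun 'I_n -> 'I_r}.

(* s_i(lambda) for 1 <= i <= n-1 : swap the (1-based) entries i and i+1,
   i.e. the 0-based positions i-1 and i. *)
Definition swapf (r n : nat) (i : nat) (l : sn r n) : sn r n :=
  [ffun j : 'I_n => l (tperm (insubd j i.-1) (insubd j i) j)].

Definition permf (r n : nat) (s : 'S_n) (l : sn r n) : sn r n :=
  [ffun j : 'I_n => l ((s^-1)%g j)].

Definition same_orbit (r n : nat) (l m : sn r n) : bool :=
  [exists s : 'S_n, m == permf s l].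

Definition is_standard (r n : nat) (m : sn r n) : bool :=
  [forall i : 'I_n, forall j : 'I_n, (i <= j)%N ==> (m i <= m j)%N].

Definition lam0 (r n : nat) (l : sn r n) : sn r n :=
  odflt l [pick m | same_orbit l m && is_standard m].

(* An A-algebra, A = Z[q,q^-1], is a ring together with a central unit q
   (image of the indeterminate q); qi is its inverse. *)
Definition Acentral (R : pzRingType) (q qi : R) : Prop :=
  q * qi = 1 /\ qi * q = 1 /\ forall x : R, q * x = x * q.

(* Defining relations of \hat H_{r,n}; g i stands for g_i (1 <= i <= n-1),
   e l for 1_l, X for X_1 and Xi for X_1^{-1}. *)
Definition Hrel (r n : nat) (R : pzRingType) (q qi : R) (g : nat -> R)
    (e : sn r n -> R) (X Xi : R) : Prop :=
  (forall i j, (0 < i < n)%N -> (0 < j < n)%N -> ((i.+2 <= j) || (j.+2 <= i))%N ->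
     g i * g j = g j * g i) /\
  (forall i, (0 < i)%N -> (i.+1 < n)%N -> g i * g i.+1 * g i = g i.+1 * g i * g i.+1) /\
  (forall i (l : sn r n), (0 < i < n)%N -> g i * e l = e (swapf i l) * g i) /\
  (\sum_(l : sn r n) e l = 1) /\
  (forall l m : sn r n, e l * e m = (if l == m then e l else 0)) /\
  (forall i, (0 < i < n)%N ->
     g i ^+ 2 = 1 + (q - qi) * \sum_(l : sn r n | swapf i l == l) g i * e l) /\
  (X * Xi = 1 /\ Xi * X = 1) /\
  ((1 < n)%N -> g 1%N * X * g 1%N * X = X * g 1%N * X * g 1%N) /\
  (forall i, (2 <= i < n)%N -> g i * X = X * g i) /\
  (forall l : sn r n, X * e l = e l * X).

Definition sends (r n : nat) (R C : pzRingType) (f : {rmorphism R -> C})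
    (q : R) (g : nat -> R) (e : sn r n -> R) (X Xi : R)
    (qc : C) (gc : nat -> C) (ec : sn r n -> C) (Xc Xic : C) : Prop :=
  f q = qc /\ (forall i, (0 < i < n)%N -> f (g i) = gc i) /\
  (forall l, f (e l) = ec l) /\ f X = Xc /\ f Xi = Xic.

(* (R, q, g, e, X, Xi) is a presentation of \hat H_{r,n}: the relations hold
   and it is universal (initial) among A-algebras with such elements. *)
Definition Hhat_pres (r n : nat) (R : pzRingType) (q qi : R) (g : nat -> R)
    (e : sn r n -> R) (X Xi : R) : Prop :=
  Acentral q qi /\ Hrel q qi g e X Xi /\
  forall (C : pzRingType) (qc qic : C) (gc : nat -> C) (ec : sn r n -> C) (Xc Xic : C),
    Acentral qc qic -> Hrel qc qic gc ec Xc Xic ->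
    (exists f : {rmorphism R -> C}, sends f q g e X Xi qc gc ec Xc Xic) /\
    (forall f1 f2 : {rmorphism R -> C},
       sends f1 q g e X Xi qc gc ec Xc Xic -> sends f2 q g e X Xi qc gc ec Xc Xic ->
       f1 =1 f2).

(* Elements of \hat E_{r,n}: families x_{l1,l2} indexed by Gamma (we set the
   value 0 outside Gamma) with x_{l1,l2} in 1_{l1^0} H 1_{l2^0}. *)
Definition Ehat_elem (r n : nat) (R : pzRingType) (e : sn r n -> R)
    (x : sn r n -> sn r n -> R) : Prop :=
  forall l1 l2 : sn r n,
    if same_orbit l1 l2 then exists y : R, x l1 l2 = e (lam0 l1) * y * e (lam0 l2)
    else x l1 l2 = 0.

Definition Emul (r n : nat) (R : pzRingType) (x y : sn r n -> sn r n -> R) :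
    sn r n -> sn r n -> R :=
  fun l1 l2 => \sum_(m : sn r n | same_orbit l1 m) x l1 m * y m l2.

Definition Eone (r n : nat) (R : pzRingType) (e : sn r n -> R) :
    sn r n -> sn r n -> R :=
  fun l1 l2 => if l1 == l2 then e (lam0 l1) else 0.

Definition Aalg_iso_to_Ehat (r n : nat) (R : pzRingType) (q : R) (e : sn r n -> R)
    (phi : R -> sn r n -> sn r n -> R) : Prop :=
  (forall x, Ehat_elem e (phi x)) /\
  (forall x y, (forall a b, phi x a b = phi y a b) -> x = y) /\
  (forall z, Ehat_elem e z -> exists x, forall a b, phi x a b = z a b) /\
  (forall x y a b, phi (x + y) a b = phi x a b + phi y a b) /\
  (forall x y a b, phi (x * y) a b = Emul (phi x) (phi y) a b) /\
  (forall x a b, phi (q * x) a b = q * phi x a b) /\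
  (forall a b, phi 1 a b = Eone e a b).

(* Main.v *)
Require Import Defs.
From HB Require Import structures.
From mathcomp Require Import all_boot all_order all_algebra all_fingroup zify.
Set Implicit Arguments. Unset Strict Implicit. Unset Printing Implicit Defensive.
Import GRing.Theory.
Local Open Scope ring_scope.
Local Close Scope ring_scope.

Lemma permf_comp (r n : nat) (s t : 'S_n) (l : sn r n) :
  permf s (permf t l) = permf (t * s)%g l.
Proof. by apply/ffunP => j; rewrite !ffunE invMg permM. Qed.

Lemma permf1 (r n : nat) (l : sn r n) : permf 1%g l = l.
Proof. by apply/ffunP => j; rewrite !ffunE invg1 perm1. Qed.

Lemma same_orbitP (r n : nat) (l m : sn r n) :
  reflect (exists s, m = permf s l) (same_orbit l m).
Proof.
apply: (iffP existsP) => [[s /eqP ->]|[s ->]]; exists s => //.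
Qed.

Lemma so_refl (r n : nat) (l : sn r n) : same_orbit l l.
Proof. by apply/same_orbitP; exists 1%g; rewrite permf1. Qed.

Lemma so_sym (r n : nat) (l m : sn r n) : same_orbit l m -> same_orbit m l.
Proof.
move/same_orbitP=> [s ->]; apply/same_orbitP; exists s^-1%g.
by rewrite permf_comp mulgV permf1.
Qed.

Lemma so_trans (r n : nat) (l m p : sn r n) :
  same_orbit l m -> same_orbit m p -> same_orbit l p.
Proof.
move/same_orbitP=> [s ->] /same_orbitP [t ->]; apply/same_orbitP; exists (s * t)%g.
by rewrite permf_comp.
Qed.

Lemma so_lam0 (r n : nat) (l : sn r n) : same_orbit l (lam0 l).
Proof.
rewrite /lam0; case: pickP => [m /andP [h _] | _] /=; [exact: h | exact: so_refl].
Qed.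

Lemma swapf_perm (r n i : nat) : (0 < i < n)%N ->
  exists a b : 'I_n, val a = i.-1 /\ val b = i /\
    forall l : sn r n, swapf i l = permf (tperm a b) l.
Proof.
case/andP=> i0 iN.
have ha : (i.-1 < n)%N by rewrite (leq_ltn_trans (leq_pred i)).
exists (Ordinal ha), (Ordinal iN); split => //; split => // l.
apply/ffunP => j; rewrite !ffunE tpermV.
rewrite (_ : insubd j i.-1 = Ordinal ha); last by apply/val_inj; rewrite /= insubdK.
rewrite (_ : insubd j i = Ordinal iN) //; by apply/val_inj; rewrite /= insubdK.
Qed.

Lemma swapfK (r n i : nat) : (0 < i < n)%N -> forall l : sn r n, swapf i (swapf i l) = l.
Proof.
move=> hi l; have [a [b [_ [_ h]]]] := swapf_perm r hi.
by rewrite !h permf_comp tperm2 permf1.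
Qed.

Lemma so_swapf (r n i : nat) (l : sn r n) : (0 < i < n)%N -> same_orbit l (swapf i l).
Proof.
move=> hi; have [a [b [_ [_ h]]]] := swapf_perm r hi; apply/same_orbitP; exists (tperm a b); exact: h.
Qed.
Local Open Scope ring_scope.

Lemma Hrel_map (r n : nat) (R C : pzRingType) (f : {rmorphism R -> C}) (q qi : R)
  (g : nat -> R) (e : sn r n -> R) (X Xi : R) :
  Hrel q qi g e X Xi ->
  Hrel (f q) (f qi) (fun i => f (g i)) (fun l => f (e l)) (f X) (f Xi).
Proof.
case=> [H1 [H2 [H3 [H4 [H5 [H6 [[H7 H7'] [H8 [H9 H10]]]]]]]]].
split; first by move=> i j hi hj hij; rewrite -!rmorphM H1.
split; first by move=> i h1 h2; rewrite -!rmorphM H2.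
split; first by move=> i l h; rewrite -!rmorphM H3.
split; first by rewrite -rmorph_sum H4 rmorph1.
split; first by move=> l m; rewrite -rmorphM H5; case: eqP; rewrite ?rmorph0.
split. move=> i h; rewrite -rmorphXn H6 // rmorphD rmorph1 rmorphM rmorphB rmorph_sum.
  by congr (_ + _ * _); apply: eq_bigr => l _; rewrite rmorphM.
split; first by rewrite -!rmorphM H7 H7' rmorph1.
split; first by move=> h; rewrite -!rmorphM H8.
split; first by move=> i h; rewrite -!rmorphM H9.
by move=> l; rewrite -!rmorphM H10.
Qed.

Definition cmx (R : pzRingType) (c x : R) : 'M[R]_2 :=
  \matrix_(i, j) (if i == j then x else if (i < j)%N then c * x - x * c else 0).

Lemma ord2E (i : 'I_2) : i = 0 \/ i = 1.
Proof. by case: i => [[|[|i]] Hi] //; [left|right]; apply: val_inj. Qed.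

Lemma cmx_morph (R : pzRingType) (c : R) : monoid_morphism (cmx c).
Proof.
split.
  apply/matrixP => i j; rewrite !mxE.
  by case: (ord2E i) => ->; case: (ord2E j) => ->; rewrite /= ?mulr1 ?mul1r ?subrr.
move=> x y; apply/matrixP => i j; rewrite !mxE !big_ord_recr big_ord0 /= add0r !mxE.
case: (ord2E i) => ->; case: (ord2E j) => -> /=; rewrite ?mul0r ?mulr0 ?addr0 ?add0r //.
by rewrite mulrBr mulrBl !mulrA [RHS]addrC addrA subrK.
Qed.

Lemma cmx_add (R : pzRingType) (c : R) : zmod_morphism (cmx c).
Proof.
move=> x y; apply/matrixP => i j; rewrite !mxE.
case: (ord2E i) => ->; case: (ord2E j) => -> /=; rewrite ?subr0 //.
by rewrite mulrBr mulrBl !opprB addrACA [RHS]addrACA [- (c * y) + _]addrC.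
Qed.

HB.instance Definition _ (R : pzRingType) (c : R) :=
  GRing.isZmodMorphism.Build R 'M[R]_2 (cmx c) (@cmx_add R c).
HB.instance Definition _ (R : pzRingType) (c : R) :=
  GRing.isMonoidMorphism.Build R 'M[R]_2 (cmx c) (@cmx_morph R c).

Lemma cmx_scalar (R : pzRingType) (c y : R) : c * y = y * c -> cmx c y = y%:M.
Proof.
move=> h; apply/matrixP => i j; rewrite !mxE.
case: (ord2E i) => ->; case: (ord2E j) => -> //=; by rewrite h subrr.
Qed.

Lemma scalar_central (R : pzRingType) (q : R) : (forall x, q * x = x * q) ->
  forall A : 'M[R]_2, q%:M * A = A * q%:M.
Proof.
move=> hq A; rewrite [LHS]mul_scalar_mx; apply/matrixP=> i j.
rewrite !mxE (bigD1 j) //= big1 ?addr0 => [|k /negbTE hk]; rewrite mxE ?eqxx ?hk ?mulr1n ?mulr0n ?mulr0 //.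
Qed.

Lemma central_gen (r n : nat) (R : pzRingType) (q qi : R) (g : nat -> R) (e : sn r n -> R)
  (X Xi : R) : Hhat_pres q qi g e X Xi -> forall c : R,
  c * q = q * c -> c * qi = qi * c -> (forall i, (0 < i < n)%N -> c * g i = g i * c) ->
  (forall l, c * e l = e l * c) -> c * X = X * c -> c * Xi = Xi * c ->
  forall x, c * x = x * c.
Proof.
case=> [[hq1 [hq2 hq3]] [Hr Hu]] c cq cqi cg ce cX cXi x.
pose f1 : {rmorphism R -> 'M[R]_2} := @scalar_mx R 2.
have Ac : Acentral (f1 q) (f1 qi).
  split; first by rewrite -rmorphM hq1 rmorph1.
  split; first by rewrite -rmorphM hq2 rmorph1.
  exact: scalar_central.
have [_ Hun] := Hu _ _ _ _ _ _ _ Ac (Hrel_map f1 Hr).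
have := Hun f1 (cmx c).
have s1 : sends f1 q g e X Xi (f1 q) (fun i => f1 (g i)) (fun l => f1 (e l)) (f1 X) (f1 Xi).
  by split=> //; split.
have s2 : sends (cmx c) q g e X Xi (f1 q) (fun i => f1 (g i)) (fun l => f1 (e l)) (f1 X) (f1 Xi).
  split; first exact: cmx_scalar.
  split; first by move=> i hi; exact: cmx_scalar (cg i hi).
  split; first by move=> l; exact: cmx_scalar.
  by split; exact: cmx_scalar.
move=> /(_ s1 s2 x) /matrixP /(_ 0 1); rewrite !mxE /= => /eqP.
by rewrite mulr0n eq_sym subr_eq0 => /eqP.
Qed.

Lemma qi_central (R : pzRingType) (q qi : R) : Acentral q qi -> forall x, qi * x = x * qi.
Proof.
case=> h1 [h2 h3] x.
by rewrite -[qi * x]mulr1 -h1 mulrA -(mulrA qi) -h3 !mulrA h2 mul1r.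
Qed.

Definition Good (r n : nat) (R : pzRingType) (e : sn r n -> R) (s : 'S_n) :=
  exists T Ti : R, T * Ti = 1 /\ Ti * T = 1 /\ forall l, T * e l = e (permf s l) * T.

Lemma good1 (r n : nat) (R : pzRingType) (e : sn r n -> R) : Good e 1%g.
Proof. by exists 1, 1; rewrite mulr1; do 2!split=> //; move=> l; rewrite permf1 mulr1 mul1r. Qed.

Lemma goodM (r n : nat) (R : pzRingType) (e : sn r n -> R) s t :
  Good e s -> Good e t -> Good e (s * t)%g.
Proof.
move=> [Ts [Tsi [h1 [h2 h3]]]] [Tt [Tti [k1 [k2 k3]]]].
exists (Tt * Ts), (Tsi * Tti); split.
  by rewrite mulrA -(mulrA Tt) h1 mulr1 k1.
split; first by rewrite mulrA -(mulrA Tsi) k2 mulr1 h2.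
by move=> l; rewrite -mulrA h3 mulrA k3 permf_comp mulrA.
Qed.

Lemma goodV (r n : nat) (R : pzRingType) (e : sn r n -> R) s :
  Good e s -> Good e s^-1%g.
Proof.
move=> [T [Ti [h1 [h2 h3]]]]; exists Ti, T; split => //; split => // l.
have E : l = permf s (permf s^-1 l) by rewrite permf_comp mulVg permf1.
by rewrite {1}E -[LHS]mulr1 -h1 mulrA -(mulrA Ti) -h3 mulrA h2 mul1r.
Qed.

Lemma good_adj (r n : nat) (R : pzRingType) (q qi : R) (g : nat -> R) (e : sn r n -> R)
  (X Xi : R) : Acentral q qi -> Hrel q qi g e X Xi ->
  forall a b : 'I_n, val b = (val a).+1 -> Good e (tperm a b).
Proof.
move=> Ac [H1 [H2 [H3 [H4 [H5 [H6 _]]]]]] a b hab.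
have hi : (0 < val b < n)%N by rewrite hab /= -hab ltn_ord.
have [a' [b' [ha [hb hs]]]] := swapf_perm r hi.
have ea : a' = a by apply: val_inj; rewrite ha hab.
have eb : b' = b by apply: val_inj.
subst a' b'.
have qc := Ac.2.2; have qic := qi_central Ac.
have dc : forall x, (q - qi) * x = x * (q - qi) by move=> x; rewrite mulrBl mulrBr qc qic.
set i := val b in hi hs H6 *.
pose F := \sum_(l : sn r n | swapf i l == l) e l.
have gF : g i * F = \sum_(l : sn r n | swapf i l == l) g i * e l by rewrite mulr_sumr.
have Fg : F * g i = \sum_(l : sn r n | swapf i l == l) g i * e l.
  rewrite mulr_suml; apply: eq_bigr => l /eqP hl.
  by rewrite H3 // hl.
exists (g i), (g i - (q - qi) * F); split.
  by rewrite mulrBr mulrA -dc -mulrA gF -expr2 H6 // addrK.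
split; first by rewrite mulrBl -mulrA Fg -expr2 H6 // addrK.
by move=> l; rewrite H3 // hs.
Qed.

Lemma good_all (r n : nat) (R : pzRingType) (e : sn r n -> R) :
  (forall a b : 'I_n, val b = (val a).+1 -> Good e (tperm a b)) -> forall s, Good e s.
Proof.
move=> Hadj.
have Hk : forall k (x y : 'I_n), val y = (val x + k)%N -> Good e (tperm x y).
  elim=> [|k IH] x y hy.
    have -> : y = x by apply: val_inj; rewrite hy addn0.
    by rewrite tperm1; exact: good1.
  case: k IH hy => [|m] IH hy.
    by apply: Hadj; rewrite hy addn1.
  have hz : (val x + m.+1 < n)%N by have := ltn_ord y; rewrite hy; lia.
  pose z := Ordinal hz.
  have Gz : Good e (tperm x z) by apply: IH.
  have Gzy : Good e (tperm z y) by apply: Hadj; rewrite hy /= addnS.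
  have -> : tperm x y = ((tperm z y)^-1 * tperm x z * tperm z y)%g.
    rewrite -mulgA -conjgE tpermJ tpermL tpermD //.
      by apply/eqP => h; have := congr1 val h; rewrite /=; lia.
    apply/eqP => h; have := congr1 val h; rewrite /= hy; change ((val x + m.+2)%N = val x -> False); lia.
  by apply: goodM => //; apply: goodM => //; apply: goodV.
have Ht : forall x y : 'I_n, Good e (tperm x y).
  move=> x y; case: (leqP x y) => hxy.
    by apply: (Hk (y - x)%N); rewrite subnKC.
  by rewrite tpermC; apply: (Hk (x - y)%N); rewrite subnKC // ltnW.
move=> s; case: (prod_tpermP s) => ts -> _.
elim: ts => [|t ts IH]; first by rewrite big_nil; exact: good1.
by rewrite big_cons; apply: goodM.
Qed.

Unset Implicit Arguments.

Theorem theorem5p1 (r n : nat) (hr : (0 < r)%N) (hn : (0 < n)%N)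
    (R : pzRingType) (q qi : R) (g : nat -> R) (e : {ffun 'I_n -> 'I_r} -> R)
    (X Xi : R) :
  Hhat_pres q qi g e X Xi ->
  exists phi : R -> {ffun 'I_n -> 'I_r} -> {ffun 'I_n -> 'I_r} -> R,
    Aalg_iso_to_Ehat q e phi.
Proof.
move=> HH; have HH' := HH; case: HH' => Ac [Hr Hu].
have Hall : forall s, Good e s := good_all (good_adj Ac Hr).
case: (Hr) => [H1 [H2 [H3 [H4 [H5 [H6 [[H7 H7'] [H8 [H9 H10]]]]]]]]].
have qc := Ac.2.2; have qic := qi_central Ac.
pose Q (l : sn r n) (p : R * R) :=
  [&& p.1 * p.2 == 1, p.2 * p.1 == 1 & p.1 * e l == e (lam0 l) * p.1].
have exQ : forall l, exists p, Q l p.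
  move=> l; have /same_orbitP [s hs] := so_lam0 l.
  have [T [Ti [h1 [h2 h3]]]] := Hall s.
  by exists (T, Ti); rewrite /Q /= h1 h2 h3 -hs !eqxx.
pose T l := (xchoose (exQ l)).1.
pose Ti l := (xchoose (exQ l)).2.
have hT : forall l, [/\ T l * Ti l = 1, Ti l * T l = 1 & T l * e l = e (lam0 l) * T l].
  by move=> l; have /and3P [/eqP h1 /eqP h2 /eqP h3] := xchooseP (exQ l).
have hT4 : forall l, e l * Ti l = Ti l * e (lam0 l).
  move=> l; have [h1 h2 h3] := hT l.
  by rewrite -[LHS]mul1r -h2 -mulrA (mulrA (T l)) h3 -!mulrA h1 mulr1.
have ee : forall a b, e a * e b = if a == b then e a else 0 := H5.
have eid : forall a, e a * e a = e a by move=> a; rewrite ee eqxx.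
pose E (l : sn r n) := \sum_(m | same_orbit l m) e m.
have Ee : forall a b, E a * e b = if same_orbit a b then e b else 0.
  move=> a b; rewrite mulr_suml; case: ifP => hab.
    rewrite (bigD1 b) //= eid big1 ?addr0 // => m /andP [_ hm].
    by rewrite ee (negbTE hm).
  rewrite big1 // => m hm; rewrite ee; case: eqP => // hmb.
  by rewrite -hmb hm in hab.
have eE : forall a b, e b * E a = if same_orbit a b then e b else 0.
  move=> a b; rewrite mulr_sumr; case: ifP => hab.
    rewrite (bigD1 b) //= eid big1 ?addr0 // => m /andP [_ hm].
    by rewrite ee eq_sym (negbTE hm).
  rewrite big1 // => m hm; rewrite ee; case: eqP => // hmb.
  by rewrite hmb hm in hab.
have Ecent : forall a x, E a * x = x * E a.
  move=> a; apply: (central_gen HH).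
  - by rewrite qc.
  - by rewrite qic.
  - move=> i hi; rewrite mulr_suml mulr_sumr.
    under [RHS]eq_bigr do rewrite H3 //.
    rewrite [RHS](reindex_inj (can_inj (swapfK hi))) /=.
    apply: eq_big => [m|m _]; last by rewrite swapfK.
    apply/idP/idP => h.
      by apply: so_trans h _; apply: so_swapf.
    apply: so_trans h _; rewrite -{2}(swapfK hi m); exact: so_swapf.
  - by move=> l; rewrite Ee eE.
  - rewrite mulr_suml mulr_sumr; apply: eq_bigr => m _; by rewrite H10.
  - rewrite mulr_suml mulr_sumr; apply: eq_bigr => m _.
    by apply/esym; rewrite -[LHS]mulr1 -H7 mulrA -(mulrA Xi) -H10 !mulrA H7' mul1r.
have evan : forall a b x, ~~ same_orbit a b -> e a * x * e b = 0.
  move=> a b x hab.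
  have -> : e a = e a * E a by rewrite eE so_refl.
  by rewrite -(mulrA (e a)) Ecent -!mulrA Ee (negbTE hab) !mulr0.
have [u uD] : {u : sn r n -> R | forall l, u l = e (lam0 l) * T l}.
  by exists (fun l => e (lam0 l) * T l).
have [v vD] : {v : sn r n -> R | forall l, v l = Ti l * e (lam0 l)}.
  by exists (fun l => Ti l * e (lam0 l)).
have uE : forall l, u l = T l * e l by move=> l; have [_ _ h3] := hT l; rewrite uD h3.
have vE : forall l, v l = e l * Ti l by move=> l; rewrite vD hT4.
have vu : forall l, v l * u l = e l.
  move=> l; have [h1 h2 h3] := hT l.
  by rewrite vE uE mulrA -(mulrA (e l)) h2 mulr1 eid.
have uv : forall a b, u a * v b = if a == b then e (lam0 a) else 0.
  move=> a b; rewrite uE vE mulrA -(mulrA (T a)) ee.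
  case: eqP => [<-|_]; last by rewrite mulr0 mul0r.
  have [h1 h2 h3] := hT a.
  by rewrite -uE uD -mulrA h1 mulr1.
pose phi x a b := if same_orbit a b then u a * x * v b else 0.
have recon : forall x, x = \sum_a \sum_b v a * phi x a b * u b.
  move=> x; rewrite -[LHS]mulr1 -[LHS]mul1r -{1}H4 -{1}H4 mulr_suml.
  apply: eq_bigr => a _; rewrite mulr_sumr mulr_sumr; apply: eq_bigr => b _.
  rewrite /phi; case: ifP => hab; last by rewrite mulr0 mul0r mulrA evan ?hab.
  by rewrite !mulrA vu -(mulrA _ (v b)) vu.
exists phi; split.
  move=> x a b; rewrite /phi; case: ifP => hab; last by rewrite hab.
  by exists (T a * x * Ti b); rewrite hab uD vD !mulrA.
split.
  by move=> x y h; rewrite (recon x) (recon y); apply: eq_bigr => a _; apply: eq_bigr => b _; rewrite h.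
split.
  move=> z hz; exists (\sum_a \sum_b v a * z a b * u b) => c d.
  rewrite /phi; have := hz c d; case: ifP => hcd; last by move=> ->.
  case=> y hy.
  rewrite mulr_sumr mulr_suml.
  under eq_bigr do rewrite mulr_sumr mulr_suml.
  rewrite [LHS](bigD1 c) //= [X in _ + X]big1 ?addr0; last first.
    move=> a hac; apply: big1 => b _.
    by rewrite !mulrA uv eq_sym (negbTE hac) !mul0r.
  rewrite [LHS](bigD1 d) //= [X in _ + X]big1 ?addr0; last first.
    move=> b hbd; rewrite !mulrA uv eqxx -(mulrA _ (u b)) uv (negbTE hbd).
    by rewrite mulr0.
  by rewrite !mulrA uv eqxx -(mulrA _ (u d)) uv eqxx hy !mulrA eid -mulrA eid.
split.
  by move=> x y a b; rewrite /phi; case: ifP; rewrite ?addr0 // mulrDr mulrDl.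
split.
  move=> x y a b; rewrite /Emul /phi; case: ifP => hab.
    rewrite (eq_bigr (fun m => u a * x * e m * y * v b)); last first.
      move=> m ham; rewrite ham (so_trans (so_sym ham) hab).
      by rewrite !mulrA -(mulrA _ (v m)) vu.
    rewrite -!mulr_suml -mulr_sumr -/(E a); congr (_ * _).
    rewrite -(mulrA (u a)) -Ecent mulrA uE (mulrA (T a * e a)) -(mulrA (T a) (e a) (E a)) eE so_refl.
    by rewrite ?mulrA.
  rewrite big1 // => m ham; rewrite ham; case: ifP => hmb; first by rewrite (so_trans ham hmb) in hab.
  by rewrite mulr0.
split.
  by move=> x a b; rewrite /phi; case: ifP; rewrite ?mulr0 // !mulrA -qc.
move=> a b; rewrite /phi /Eone; case: ifP => hab; first by rewrite mulr1 uv.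
by case: eqP => // hab'; rewrite hab' so_refl in hab.
Qed.
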